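(* Let $C\subseteq\{0,1\}^n$ be shortest-path closed and let $v\in C$ be a corner vertex of $C$. Then $C\setminus\{v\}$ is shortest-path closed.
   Context: For $C\subseteq\{0,1\}^n$, the one-inclusion graph $\Gamma(C)$ has vertex set $C$ and an edge between $u,v$ iff they differ in exactly one coordinate. A $k$-cube in $C$ is a set of $2^k$ points of $C$ agreeing outside some set of $k$ coordinates and taking all $2^k$ values on those coordinates. $C$ is shortest-path closed if for any $u,v\in C$, $\Gamma(C)$ contains a path from $u$ to $v$ of length $\|u-v\|_1$ (the Hamming distance). A vertex $v\in C$ is a corner vertex of $C$ if among all cubes contained in $C$ that contain $v$ there is a unique one $Q$ of maximum dimension, and all neighbours of $v$ in $\Gamma(C)$ lie in $Q$. *)

(* Defs.v *)
From mathcomp Require Import all_boot.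
Set Implicit Arguments. Unset Strict Implicit. Unset Printing Implicit Defensive.

Definition point (n : nat) := {ffun 'I_n -> bool}.

Definition hamming n (u v : point n) : nat := #|[set i | u i != v i]|.

Definition adj n (u v : point n) : bool := hamming u v == 1.

(* Gamma(C) contains a path from u to v of length ||u-v||_1:
   a sequence of vertices u = x_0, x_1, ..., x_m = v, all in C, consecutive
   ones adjacent, with m = hamming u v. *)
Definition geodesic_in n (C : {set point n}) (u v : point n) : Prop :=
  exists p : seq (point n),
    [/\ path (@adj n) u p, all (fun x => x \in C) p, last u p = v
      & size p = hamming u v].

Definition sp_closed n (C : {set point n}) : Prop :=
  forall u v, u \in C -> v \in C -> geodesic_in C u v.

(* The subcube with free coordinates S through x: all points agreeing with x
   outside S. It has 2^#|S| points and dimension #|S|. *)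
Definition subcube n (S : {set 'I_n}) (x : point n) : {set point n} :=
  [set y : point n | [forall i, (i \notin S) ==> (y i == x i)]].

Definition cube_in n (C : {set point n}) (k : nat) (Q : {set point n}) : Prop :=
  exists S : {set 'I_n}, exists x : point n,
    [/\ #|S| = k, Q = subcube S x & Q \subset C].

Definition corner n (C : {set point n}) (v : point n) : Prop :=
  v \in C /\
  exists Q : {set point n}, exists k : nat,
    [/\ cube_in C k Q, v \in Q,
        (forall Q' k', cube_in C k' Q' -> v \in Q' -> k' <= k),
        (forall Q', cube_in C k Q' -> v \in Q' -> Q' = Q)
      & (forall w, w \in C -> adj v w -> w \in Q)].

(* Main.v *)
Require Import Defs.
From mathcomp Require Import all_boot.
Set Implicit Arguments. Unset Strict Implicit.

Section H.
Variable n : nat.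
Implicit Types a b c : point n.

Lemma hamC a b : hamming a b = hamming b a.
Proof. by rewrite /hamming; apply: eq_card => k; rewrite !inE eq_sym. Qed.

Lemma ham0 a : hamming a a = 0.
Proof. by rewrite /hamming; apply/eqP; rewrite cards_eq0; apply/eqP/setP=> k; rewrite !inE eqxx. Qed.

Lemma ham_tri a b c : hamming a c <= hamming a b + hamming b c.
Proof.
rewrite /hamming.
apply: (leq_trans (subset_leq_card (_ : _ \subset [set i | a i != b i] :|: [set i | b i != c i]))).
  apply/subsetP => k; rewrite !inE.
  by case: (a k); case: (b k); case: (c k).
by rewrite cardsU leq_subr.
Qed.

Lemma path_bound p a : path (@adj n) a p -> hamming a (last a p) <= size p.
Proof.
elim: p a => [|x p IH] a /=; first by rewrite ham0.
move=> /andP [/eqP Hax Hp].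
apply: leq_trans (ham_tri a x _) _.
by rewrite Hax add1n ltnS IH.
Qed.

Lemma adjP a b : adj a b -> exists i, [set k | a k != b k] = [set i].
Proof. by move=> H; apply/cards1P. Qed.

End H.

Theorem lemma3 (n : nat) (C : {set point n}) (v : point n) :
  sp_closed C -> corner C v -> sp_closed (C :\ v).
Proof.
move=> HC [vC [Q [k [[S [x0 [_ EQ QC]]] vQ _ _ Nb]]]].
subst Q; clear k.
have inQ : forall y, y \in subcube S x0 -> forall i, i \notin S -> y i = x0 i.
  by move=> y; rewrite inE => /forallP H i iS; move: (H i); rewrite iS => /eqP.
suff: forall d u w, hamming u w = d -> u \in C :\ v -> w \in C :\ v ->
        geodesic_in (C :\ v) u w.
  by move=> H u w; apply: H.
elim/ltn_ind => d IH u w Hd uC wC.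
move: (uC) (wC); rewrite !inE => /andP [uv uC'] /andP [wv wC'].
have [p [Pp Ap Lp Sp]] := HC u w uC' wC'.
case: p Pp Ap Lp Sp => [|x p] /=.
  move=> _ _ <- _; exists [::]; split=> //; by rewrite ham0.
move=> /andP [/eqP Hux Pp] /andP [xC Ap] Lp Sp.
have Hxw : hamming x w = d.-1.
  have h1 := path_bound Pp; rewrite Lp in h1.
  have h2 := ham_tri u x w; rewrite Hux Hd in h2.
  rewrite -Hd -Sp /=; apply/eqP; rewrite eqn_leq h1 /=.
  by rewrite -(leq_add2l 1) add1n Sp Hd.
have d0 : 0 < d by rewrite -Hd -Sp.
case: (eqVneq x v) => [xv|xv]; last first.
  have [q [Pq Aq Lq Sq]] : geodesic_in (C :\ v) x w.
    apply: (IH d.-1 _ x w Hxw) => //; [by rewrite ltn_predL | by apply/setD1P].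
  exists (x :: q); split => /=.
  - by rewrite Pq /adj Hux.
  - by rewrite Aq andbT; apply/setD1P.
  - by [].
  - by rewrite Sq Hxw Hd prednK.
subst x.
case: p Pp Ap Lp Sp Hxw => [|y p] /=.
  by move=> _ _ vw; rewrite vw eqxx in wv.
move=> /andP [/eqP Hvy Pp] /andP [yC Ap] Lp Sp Hvw.
have Hyw : hamming y w <= d.-2.
  have h1 := path_bound Pp; rewrite Lp in h1.
  by rewrite -Hd -Sp /=.
have d2 : 1 < d by rewrite -Hd -Sp.
have uQ : u \in subcube S x0 by apply: Nb => //; rewrite /adj hamC Hux.
have yQ : y \in subcube S x0 by apply: Nb => //; rewrite /adj Hvy.
have [i Di] : exists i, [set k | u k != v k] = [set i] by apply/cards1P/eqP; exact: Hux.
have [j Dj] : exists j, [set k | v k != y k] = [set j] by apply/cards1P/eqP; exact: Hvy.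
have Dik k : (u k != v k) = (k == i) by move/setP: Di => /(_ k); rewrite !inE.
have Djk k : (v k != y k) = (k == j) by move/setP: Dj => /(_ k); rewrite !inE.
have ij : i != j.
  apply/eqP => eij; subst j.
  have uy : u = y.
    apply/ffunP => k; case: (eqVneq k i) => [->|ki].
      move: (Dik i) (Djk i); rewrite eqxx.
      by case: (u i); case: (v i); case: (y i).
    move: (Dik k) (Djk k); rewrite (negbTE ki).
    by move=> /negbFE/eqP -> /negbFE/eqP.
  by subst y; move: Hyw; rewrite Hd leqNgt; case/negP; case: (d) d2 => [|[|d']].
set z : point n := [ffun k => if k == i then u k else y k].
have Huz : hamming u z = 1.
  rewrite /hamming (_ : [set k | u k != z k] = [set j]) ?cards1 //.
  apply/setP => k; rewrite !inE ffunE; case: (eqVneq k i) => [->|ki].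
    by rewrite eqxx (negbTE ij).
  have := Dik k; rewrite (negbTE ki) => /negbFE/eqP ->.
  by rewrite Djk.
have Hzy : hamming z y = 1.
  rewrite /hamming (_ : [set k | z k != y k] = [set i]) ?cards1 //.
  apply/setP => k; rewrite !inE ffunE; case: (eqVneq k i) => [->|ki].
    have := Djk i; rewrite (negbTE ij) => /negbFE/eqP <-.
    by rewrite Dik eqxx.
  by rewrite eqxx.
have zv : z != v.
  apply/eqP => /ffunP /(_ i); rewrite ffunE eqxx => /eqP.
  by rewrite -[_ == _]negbK Dik eqxx.
have zC : z \in C.
  apply: (subsetP QC); rewrite inE; apply/forallP => k; apply/implyP => kS.
  rewrite ffunE; case: (eqVneq k i) => [eki|ki].
    by subst k; rewrite (inQ u uQ i kS).
  by rewrite (inQ y yQ k kS).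
have Hzw : hamming z w = d.-1.
  have h1 := ham_tri z y w; rewrite Hzy in h1.
  have h2 := ham_tri u z w; rewrite Huz Hd in h2.
  apply/eqP; rewrite eqn_leq; apply/andP; split.
    apply: leq_trans h1 _; rewrite add1n.
    apply: leq_trans (_ : (d.-2).+1 <= _); first by rewrite ltnS.
    by case: (d) d2 => [|[|d']].
  by rewrite -(leq_add2l 1) add1n prednK.
have [q [Pq Aq Lq Sq]] : geodesic_in (C :\ v) z w.
  apply: (IH d.-1 _ z w Hzw) => //; [by rewrite ltn_predL | by apply/setD1P].
exists (z :: q); split => /=.
- by rewrite Pq /adj Huz.
- by rewrite Aq andbT; apply/setD1P.
- by [].
- by rewrite Sq Hzw Hd prednK.
Qed.
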